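(* Let $m,\varepsilon>0$ and write $\widetilde{A}_k(x,t)=\widetilde{A}_k(x,t,m,\varepsilon)$. For each $(x,t)\in\varepsilon\mathbb{Z}^2$, $$\widetilde{A}_1(x,t)=\frac{1}{\sqrt{1+m^2\varepsilon^2}}\big(\widetilde{A}_1(x+\varepsilon,t-\varepsilon)+m\varepsilon\,\widetilde{A}_2(x,t-\varepsilon)\big),$$ $$\widetilde{A}_2(x,t)=\frac{1}{\sqrt{1+m^2\varepsilon^2}}\big(\widetilde{A}_2(x-\varepsilon,t-\varepsilon)-m\varepsilon\,\widetilde{A}_1(x,t-\varepsilon)\big)+2\delta_{x0}\delta_{t0}.$$
   Context: $\delta_{xy}$ is the Kronecker delta. For $\delta\in(0,1)$ let $A_k(x,t)=A_k(x,t,m,\varepsilon,\delta)$, $k\in\{1,2\}$, be the unique pair of complex-valued functions on $\{(x,t)\in\mathbb{R}^2:2x/\varepsilon,2t/\varepsilon,(x+t)/\varepsilon\in\mathbb{Z}\}$ satisfying: (1) for $2x/\varepsilon,2t/\varepsilon$ even, $A_1(x,t)=\frac{1}{\sqrt{1+m^2\varepsilon^2}}(A_1(x+\frac{\varepsilon}{2},t-\frac{\varepsilon}{2})+m\varepsilon A_2(x+\frac{\varepsilon}{2},t-\frac{\varepsilon}{2}))$ and $A_2(x,t)=\frac{1}{\sqrt{1+m^2\varepsilon^2}}(A_2(x-\frac{\varepsilon}{2},t-\frac{\varepsilon}{2})-m\varepsilon A_1(x-\frac{\varepsilon}{2},t-\frac{\varepsilon}{2}))+2\delta_{x0}\delta_{t0}$;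 (2) for $2x/\varepsilon,2t/\varepsilon$ odd, $A_1(x,t)=\frac{1}{\sqrt{1-\delta^2}}(A_1(x+\frac{\varepsilon}{2},t-\frac{\varepsilon}{2})-i\delta A_2(x+\frac{\varepsilon}{2},t-\frac{\varepsilon}{2}))$ and $A_2(x,t)=\frac{1}{\sqrt{1-\delta^2}}(A_2(x-\frac{\varepsilon}{2},t-\frac{\varepsilon}{2})+i\delta A_1(x-\frac{\varepsilon}{2},t-\frac{\varepsilon}{2}))$; (3) $\sum_{(x,t)\in\varepsilon\mathbb{Z}^2}(|A_1|^2+|A_2|^2)<\infty$ (existence and uniqueness are known). $\widetilde{A}_k(x,t,m,\varepsilon):=\lim_{\delta\searrow0}A_k(x,t,m,\varepsilon,\delta)$ for $(x,t)\in\varepsilon\mathbb{Z}^2$ (known to exist). *)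

(* Defs.v *)
From Stdlib Require Import Reals ZArith.
From Coquelicot Require Import Coquelicot.
Open Scope R_scope.

(* Lattice encoding: a point (x,t) of the lattice
   {2x/eps, 2t/eps, (x+t)/eps in Z} is written x = a*eps/2, t = b*eps/2 with
   a, b : Z (a+b even).  A function on the lattice is a map Z -> Z -> C
   (values at a+b odd are irrelevant and unconstrained).
   "2x/eps, 2t/eps even" <-> a, b even; "odd" <-> a, b odd. *)

Definition kron (a b : Z) : C := if Z.eq_dec a b then RtoC 1 else RtoC 0.

Definition box_sum (f : Z -> Z -> R) (N : nat) : R :=
  sum_f_R0 (fun k => sum_f_R0 (fun l =>
     f (Z.of_nat k - Z.of_nat N)%Z (Z.of_nat l - Z.of_nat N)%Z) (2 * N)) (2 * N).

Definition is_solution (m eps delta : R) (A1 A2 : Z -> Z -> C) : Prop :=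
  (forall a b : Z, Z.Even a -> Z.Even b ->
     A1 a b = (RtoC (/ sqrt (1 + m^2 * eps^2)) *
                (A1 (a + 1)%Z (b - 1)%Z + RtoC (m * eps) * A2 (a + 1)%Z (b - 1)%Z))%C /\
     A2 a b = (RtoC (/ sqrt (1 + m^2 * eps^2)) *
                (A2 (a - 1)%Z (b - 1)%Z - RtoC (m * eps) * A1 (a - 1)%Z (b - 1)%Z)
               + RtoC 2 * kron a 0 * kron b 0)%C) /\
  (forall a b : Z, Z.Odd a -> Z.Odd b ->
     A1 a b = (RtoC (/ sqrt (1 - delta^2)) *
                (A1 (a + 1)%Z (b - 1)%Z - Ci * RtoC delta * A2 (a + 1)%Z (b - 1)%Z))%C /\
     A2 a b = (RtoC (/ sqrt (1 - delta^2)) *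
                (A2 (a - 1)%Z (b - 1)%Z + Ci * RtoC delta * A1 (a - 1)%Z (b - 1)%Z))%C) /\
  (* (3): sum over (x,t) in eps Z^2, i.e. a = 2i, b = 2j, is finite *)
  (exists B : R, forall N : nat,
     box_sum (fun i j => (Cmod (A1 (2*i)%Z (2*j)%Z))^2 + (Cmod (A2 (2*i)%Z (2*j)%Z))^2) N <= B).

(* Main.v *)
Require Import Defs.
From Stdlib Require Import Reals ZArith Lia Lra.
From Coquelicot Require Import Coquelicot.
Open Scope R_scope.

Section H.
Context {T : Type} {F : (T -> Prop) -> Prop} {FF : Filter F}.

Lemma limC_mult (f g : T -> C) a b :
  filterlim f F (locally a) -> filterlim g F (locally b) ->
  filterlim (fun x => (f x * g x)%C) F (locally (a * b)%C).
Proof.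
  intros Hf Hg.
  assert (Hf' : filterlim f F (@locally (AbsRing_UniformSpace C_AbsRing) a)).
  { eapply filterlim_filter_le_2; [|exact Hf].
    intros P [e He]. apply (@locally_le_locally_norm C_AbsRing C_NormedModule).
    exists e. intros y Hy. apply He. exact Hy. }
  exact (filterlim_comp_2 (G := @locally (AbsRing_UniformSpace C_AbsRing) a) f g (fun u v => @scal C_AbsRing C_NormedModule u v) Hf' Hg
    (@filterlim_scal C_AbsRing C_NormedModule a b)).
Qed.

Lemma limC_plus (f g : T -> C) a b :
  filterlim f F (locally a) -> filterlim g F (locally b) ->
  filterlim (fun x => (f x + g x)%C) F (locally (a + b)%C).
Proof.
  intros Hf Hg.
  exact (filterlim_comp_2 f g (fun u v => @plus C_NormedModule u v) Hf Hg
    (@filterlim_plus C_AbsRing C_NormedModule a b)).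
Qed.

Lemma limC_opp (f : T -> C) a :
  filterlim f F (locally a) ->
  filterlim (fun x => (- f x)%C) F (locally (- a)%C).
Proof.
  intros Hf.
  exact (filterlim_comp _ _ _ f (@opp C_NormedModule) F _ _ Hf
    (@filterlim_opp C_AbsRing C_NormedModule a)).
Qed.

Lemma limC_minus (f g : T -> C) a b :
  filterlim f F (locally a) -> filterlim g F (locally b) ->
  filterlim (fun x => (f x - g x)%C) F (locally (a - b)%C).
Proof.
  intros Hf Hg. apply limC_plus; [exact Hf | apply limC_opp; exact Hg].
Qed.

Lemma limC_const (a : C) : filterlim (fun _ => a) F (locally a).
Proof. apply filterlim_const. Qed.

Lemma limC_RtoC (f : T -> R) l :
  filterlim f F (locally l) -> filterlim (fun x => RtoC (f x)) F (locally (RtoC l)).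
Proof.
  intros Hf. apply filterlim_locally. intros e.
  generalize (proj1 (filterlim_locally f l) Hf e). apply filter_imp.
  intros x Hx. split; [exact Hx|]. simpl. apply ball_center.
Qed.
End H.

Lemma lim_s : filterlim (fun d => / sqrt (1 - d^2)) (at_right 0) (locally 1).
Proof.
  assert (Hc : continuous (fun d => / sqrt (1 - d^2)) 0).
  { apply (@ex_derive_continuous R_AbsRing R_NormedModule). auto_derive. replace (1 + - (0 * (0 * 1))) with 1 by ring. rewrite sqrt_1. split; [lra|split;[lra|trivial]].
  }
  unfold continuous in Hc.
  rewrite pow_i, Rminus_0_r, sqrt_1, Rinv_1 in Hc by lia.
  apply (filterlim_comp _ _ _ (fun d => d) (fun d => / sqrt (1 - d^2)) (at_right 0) (locally 0)).
  - intros P [e He]. exists e. intros y Hy _. apply He, Hy.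
  - exact Hc.
Qed.

Lemma lim_id : filterlim (fun d => d) (at_right 0) (locally 0).
Proof. intros P [e He]. exists e. intros y Hy _. apply He, Hy. Qed.

Lemma near01 : at_right 0 (fun d => 0 < d < 1).
Proof.
  exists (mkposreal 1 Rlt_0_1). intros y Hy Hp. split; [exact Hp|].
  unfold ball in Hy; simpl in Hy; unfold AbsRing_ball, abs, minus, plus, opp in Hy; simpl in Hy.
  apply Rabs_lt_between in Hy. lra.
Qed.

Lemma Ceq (a b : C) : fst a = fst b -> snd a = snd b -> a = b.
Proof. destruct a, b; simpl; intros; subst; reflexivity. Qed.
Theorem proposition4 (m eps : R) (hm : 0 < m) (heps : 0 < eps)
  (A1 A2 : R -> Z -> Z -> C) (At1 At2 : Z -> Z -> C)
  (hsol : forall delta : R, 0 < delta < 1 -> is_solution m eps delta (A1 delta) (A2 delta))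
  (hlim1 : forall i j : Z,
     filterlim (fun d => A1 d (2*i)%Z (2*j)%Z) (at_right 0) (locally (At1 i j)))
  (hlim2 : forall i j : Z,
     filterlim (fun d => A2 d (2*i)%Z (2*j)%Z) (at_right 0) (locally (At2 i j))) :
  forall i j : Z,
    At1 i j = (RtoC (/ sqrt (1 + m^2 * eps^2)) *
                (At1 (i + 1)%Z (j - 1)%Z + RtoC (m * eps) * At2 i (j - 1)%Z))%C /\
    At2 i j = (RtoC (/ sqrt (1 + m^2 * eps^2)) *
                (At2 (i - 1)%Z (j - 1)%Z - RtoC (m * eps) * At1 i (j - 1)%Z)
               + RtoC 2 * kron i 0 * kron j 0)%C.
Proof.
  intros i j.
  set (c := RtoC (/ sqrt (1 + m ^ 2 * eps ^ 2))).
  set (me := RtoC (m * eps)).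
  assert (Hs := limC_RtoC (F := at_right 0) _ _ lim_s).
  assert (Hd := limC_RtoC (F := at_right 0) _ _ lim_id).
  assert (HP : ProperFilter' (at_right 0)).
  { apply Proper_StrongProper. apply at_right_proper_filter. }
  split.
  - set (G := fun d => (c * (RtoC (/ sqrt (1 - d^2)) * (A1 d (2*(i+1))%Z (2*(j-1))%Z
              - Ci * RtoC d * A2 d (2*(i+1))%Z (2*(j-1))%Z)
           + me * (RtoC (/ sqrt (1 - d^2)) * (A2 d (2*i)%Z (2*(j-1))%Z
              + Ci * RtoC d * A1 d (2*i)%Z (2*(j-1))%Z))))%C).
    assert (HG : filterlim G (at_right 0) (locally (c * (RtoC 1 * (At1 (i+1)%Z (j-1)%Z - Ci * RtoC 0 * At2 (i+1)%Z (j-1)%Z) + me * (RtoC 1 * (At2 i (j-1)%Z + Ci * RtoC 0 * At1 i (j-1)%Z))))%C)).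
    { unfold G. apply limC_mult; [apply limC_const|].
      apply limC_plus.
      + apply limC_mult; [exact Hs|]. apply limC_minus; [apply hlim1|].
        apply limC_mult; [apply limC_mult; [apply limC_const|exact Hd]|apply hlim2].
      + apply limC_mult; [apply limC_const|]. apply limC_mult; [exact Hs|].
        apply limC_plus; [apply hlim2|].
        apply limC_mult; [apply limC_mult; [apply limC_const|exact Hd]|apply hlim1]. }
    assert (HF : filterlim (fun d => A1 d (2*i)%Z (2*j)%Z) (at_right 0) (locally (At1 i j))) by apply hlim1.
    assert (HG' : filterlim (fun d => A1 d (2*i)%Z (2*j)%Z) (at_right 0)
      (locally (c * (RtoC 1 * (At1 (i+1)%Z (j-1)%Z - Ci * RtoC 0 * At2 (i+1)%Z (j-1)%Z) + me * (RtoC 1 * (At2 i (j-1)%Z + Ci * RtoC 0 * At1 i (j-1)%Z))))%C)).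
    { eapply filterlim_ext_loc; [|exact HG].
      generalize near01. apply filter_imp. intros d Hd01.
      destruct (hsol d Hd01) as [He [Ho _]].
      destruct (He (2*i)%Z (2*j)%Z) as [E1 _]; [exists i; reflexivity|exists j; reflexivity|].
      destruct (Ho (2*i+1)%Z (2*j-1)%Z) as [O1 O2];
        [exists i; reflexivity|exists (j-1)%Z; ring|].
      rewrite E1, O1, O2. unfold G.
      replace (2*i+1+1)%Z with (2*(i+1))%Z by ring.
      replace (2*j-1-1)%Z with (2*(j-1))%Z by ring.
      replace (2*i+1-1)%Z with (2*i)%Z by ring.
      reflexivity. }
    rewrite (filterlim_locally_unique _ _ _ HF HG').
    apply Ceq; unfold c, me; simpl; ring.
  - set (G := fun d => (c * (RtoC (/ sqrt (1 - d^2)) * (A2 d (2*(i-1))%Z (2*(j-1))%Z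
              + Ci * RtoC d * A1 d (2*(i-1))%Z (2*(j-1))%Z)
           - me * (RtoC (/ sqrt (1 - d^2)) * (A1 d (2*i)%Z (2*(j-1))%Z
              - Ci * RtoC d * A2 d (2*i)%Z (2*(j-1))%Z))) + RtoC 2 * kron i 0 * kron j 0)%C).
    assert (HG : filterlim G (at_right 0) (locally (c * (RtoC 1 * (At2 (i-1)%Z (j-1)%Z + Ci * RtoC 0 * At1 (i-1)%Z (j-1)%Z) - me * (RtoC 1 * (At1 i (j-1)%Z - Ci * RtoC 0 * At2 i (j-1)%Z))) + RtoC 2 * kron i 0 * kron j 0)%C)).
    { unfold G. apply limC_plus; [|apply limC_const].
      apply limC_mult; [apply limC_const|].
      apply limC_minus.
      + apply limC_mult; [exact Hs|]. apply limC_plus; [apply hlim2|].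
        apply limC_mult; [apply limC_mult; [apply limC_const|exact Hd]|apply hlim1].
      + apply limC_mult; [apply limC_const|]. apply limC_mult; [exact Hs|].
        apply limC_minus; [apply hlim1|].
        apply limC_mult; [apply limC_mult; [apply limC_const|exact Hd]|apply hlim2]. }
    assert (HF : filterlim (fun d => A2 d (2*i)%Z (2*j)%Z) (at_right 0) (locally (At2 i j))) by apply hlim2.
    assert (HG' : filterlim (fun d => A2 d (2*i)%Z (2*j)%Z) (at_right 0)
      (locally (c * (RtoC 1 * (At2 (i-1)%Z (j-1)%Z + Ci * RtoC 0 * At1 (i-1)%Z (j-1)%Z) - me * (RtoC 1 * (At1 i (j-1)%Z - Ci * RtoC 0 * At2 i (j-1)%Z))) + RtoC 2 * kron i 0 * kron j 0)%C)).
    { eapply filterlim_ext_loc; [|exact HG].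
      generalize near01. apply filter_imp. intros d Hd01.
      destruct (hsol d Hd01) as [He [Ho _]].
      destruct (He (2*i)%Z (2*j)%Z) as [_ E2]; [exists i; reflexivity|exists j; reflexivity|].
      destruct (Ho (2*i-1)%Z (2*j-1)%Z) as [O1 O2];
        [exists (i-1)%Z; ring|exists (j-1)%Z; ring|].
      rewrite E2, O1, O2. unfold G.
      replace (2*i-1+1)%Z with (2*i)%Z by ring.
      replace (2*j-1-1)%Z with (2*(j-1))%Z by ring.
      replace (2*i-1-1)%Z with (2*(i-1))%Z by ring.
      assert (Hk : forall k, kron (2*k)%Z 0 = kron k 0).
      { intro k. unfold kron. destruct (Z.eq_dec (2*k) 0), (Z.eq_dec k 0); try reflexivity; lia. }
      rewrite !Hk. reflexivity. }
    rewrite (filterlim_locally_unique _ _ _ HF HG').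
    apply Ceq; unfold c, me; simpl; ring.
Qed.
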